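(* Let $S$ be a monoid and $A$ an $S$-act. Then: (a) for each $n\in\mathbb N$, $a\mapsto[a]$ embeds $A$ into $A^n_1$ and into $A^{\aleph_0}_1$, and with the natural identifications $A^i_1\subseteq A^j_1$ for $i\le j$ and $A^{\aleph_0}_1=\bigcup_{n}A^n_1$; (b) every finite consistent set of equations over $A$ in $m$ variables has a solution in $A^m_1$, hence in $A^n_1$ for every $n\ge m$ and in $A^{\aleph_0}_1$; (c) $A$ is $n$-absolutely pure if and only if $A$ is a retract of $A^n_1$, and $A$ is absolutely pure if and only if $A$ is a retract of $A^{\aleph_0}_1$.
   Context: A (right) $S$-act is a set with an action $(a,s)\mapsto as$ with $a1=a$, $a(st)=(as)t$. Equations over $A$ with variables from a set have the forms $xs=yt$, $xs=xt$, $xs=a$ ($a\in A$); a solution in $B\supseteq A$ is a family in $B$ satisfying them; a set is consistent if it has a solution in some $S$-act containing $A$. $A$ is $n$-absolutely pure if every finite consistent set of equations over $A$ in at most $n$ variables has a solution in $A$; absolutely pure if this holds for all $n$; a retract of $B\supseteq A$ if there is an $S$-morphism $B\to A$ fixing $A$ pointwise. For a set $\Sigma$ of equations, $v(\Sigma)$ is the number of variables occurring in it and $H(\Sigma)=\{(xu,yv):xu=yv\in\Sigma\}$, $K(\Sigma)=\{(xs,a):xs=a\in\Sigma\}$. Canonical first step: let $\Theta(A,m)$ be the collection of all finite consistent sets of equations $\Sigma$ over $A$ with $v(\Sigma)=m$, where variables are chosen so that distinct members of $\bigcup_m\Theta(A,m)$ use pairwise disjoint sets of variables. Let $\Omega_n$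 be the set of all variables occurring in members of $\bigcup_{1\le m\le n}\Theta(A,m)$ and $\Omega_{\aleph_0}=\bigcup_n\Omega_n$. Define $A^n_1=(A\sqcup F_S(\Omega_n))/\kappa(n)$ and $A^{\aleph_0}_1=(A\sqcup F_S(\Omega_{\aleph_0}))/\kappa(\aleph_0)$, where $F_S(\cdot)$ is the free $S$-act, $\kappa(n)$ is the congruence generated by $\bigcup\{H(\Sigma)\cup K(\Sigma):\Sigma\in\Theta(A,m),1\le m\le n\}$, and $\kappa(\aleph_0)$ that generated by $\bigcup\{H(\Sigma)\cup K(\Sigma):\Sigma\in\bigcup_m\Theta(A,m)\}$. *)

(* Defs.v *)
From Stdlib Require Import ProofIrrelevance FunctionalExtensionality PropExtensionality List.
From mathcomp Require Import all_boot.
Set Implicit Arguments. Unset Strict Implicit. Unset Printing Implicit Defensive.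

Record monoid := Monoid {
  mcar :> Type;
  mmul : mcar -> mcar -> mcar;
  mone : mcar;
  mmulA : forall x y z, mmul x (mmul y z) = mmul (mmul x y) z;
  mmul1l : forall x, mmul mone x = x;
  mmul1r : forall x, mmul x mone = x }.

Record act (S : monoid) := Act {
  acar :> Type;
  aact : acar -> S -> acar;
  aact1 : forall a, aact a (mone S) = a;
  aactM : forall (a : acar) (s t : S), aact a (@mmul S s t) = aact (aact a s) t }.
Arguments aact {S} _ _ _.

Section Acts.
Variable S : monoid.

Definition is_morphism (A B : act S) (f : A -> B) : Prop :=
  forall a s, f (aact A a s) = aact B (f a) s.

Definition is_embedding (A B : act S) (f : A -> B) : Prop :=
  is_morphism f /\ injective f.

Definition retract (A B : act S) (iota : A -> B) : Prop :=
  exists r : B -> A, is_morphism r /\ forall a, r (iota a) = a.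

Variable A : act S.

(** Equations over A with variables from nat:  x s = y t  (covers x s = x t)
    and  x s = a. *)
Inductive equation : Type :=
  | EqVar (x : nat) (s : S) (y : nat) (t : S)
  | EqConst (x : nat) (s : S) (a : A).

Definition eq_vars (e : equation) : seq nat :=
  match e with EqVar x _ y _ => [:: x; y] | EqConst x _ _ => [:: x] end.

Definition vars (Σ : seq equation) : seq nat := flatten (map eq_vars Σ).
Definition nvars (Σ : seq equation) : nat := size (undup (vars Σ)).

Definition is_solution (B : act S) (iota : A -> B) (sol : nat -> option B)
  (Σ : seq equation) : Prop :=
  forall e, List.In e Σ ->
    match e with
    | EqVar x s y t => exists bx by_, sol x = Some bx /\ sol y = Some by_ /\
                         aact B bx s = aact B by_ t
    | EqConst x s a => exists bx, sol x = Some bx /\ aact B bx s = iota a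
    end.

Definition has_solution_in (B : act S) (iota : A -> B) (Σ : seq equation) :=
  exists sol, is_solution iota sol Σ.

Definition consistent (Σ : seq equation) : Prop :=
  exists (B : act S) (iota : A -> B), is_embedding iota /\ has_solution_in iota Σ.

Definition n_abs_pure (n : nat) : Prop :=
  forall Σ, consistent Σ -> nvars Σ <= n -> has_solution_in (B := A) id Σ.

Definition abs_pure : Prop := forall n, n_abs_pure n.

(** The canonical first step.  [P] is the allowed range of v(Σ):
    [Pn n] = {1..n} gives A^n_1, [Pinf] = {m >= 1} gives A^{aleph_0}_1.
    The variables of the member Σ are tagged by Σ itself, so distinct members
    use disjoint sets of variables. *)
Definition Omega (P : nat -> bool) : Type :=
  {p : seq equation * nat | consistent p.1 /\ P (nvars p.1) /\ p.2 \in vars p.1}.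

(** A ⊔ F_S(Ω) with F_S(Ω) = Ω × S *)
Definition carrier (P : nat -> bool) : Type := (A + (Omega P * S))%type.

Definition cact (P : nat -> bool) (x : carrier P) (s : S) : carrier P :=
  match x with
  | inl a => inl (aact A a s)
  | inr (o, u) => inr (o, @mmul S u s)
  end.

Inductive gen (P : nat -> bool) : carrier P -> carrier P -> Prop :=
  | genH (o1 o2 : Omega P) (u t : S) :
      (sval o1).1 = (sval o2).1 ->
      List.In (EqVar (sval o1).2 u (sval o2).2 t) (sval o1).1 ->
      gen (inr (o1, u)) (inr (o2, t))
  | genK (o : Omega P) (s : S) (a : A) :
      List.In (EqConst (sval o).2 s a) (sval o).1 ->
      gen (inr (o, s)) (inl a).

Inductive kappa (P : nat -> bool) : carrier P -> carrier P -> Prop :=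
  | k_gen x y : gen x y -> kappa x y
  | k_refl x : kappa x x
  | k_sym x y : kappa x y -> kappa y x
  | k_trans x y z : kappa x y -> kappa y z -> kappa x z
  | k_act x y s : kappa x y -> kappa (cact x s) (cact y s).

Definition qcar (P : nat -> bool) : Type :=
  {X : carrier P -> Prop | exists x, X = kappa x}.

Definition cls (P : nat -> bool) (x : carrier P) : qcar P :=
  exist _ (kappa x) (ex_intro _ x erefl).

Lemma qact_proof (P : nat -> bool) (X : qcar P) (s : S) :
  exists z, (fun y => exists x, sval X x /\ kappa (cact x s) y) = kappa z.
Proof.
destruct X as [X [x0 ->]]; exists (cact x0 s); simpl.
apply functional_extensionality => y; apply propositional_extensionality.
split.
- move=> [x [H1 H2]]; apply: k_trans (k_act s H1) H2.
- move=> H; exists x0; split => //; apply: k_refl.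
Qed.

Definition qact (P : nat -> bool) (X : qcar P) (s : S) : qcar P :=
  exist _ _ (qact_proof X s).

Lemma qeq (P : nat -> bool) (X Y : qcar P) : sval X = sval Y -> X = Y.
Proof.
destruct X as [X hX], Y as [Y hY]; simpl => E; subst Y.
f_equal; apply proof_irrelevance.
Qed.

Lemma qact_cls (P : nat -> bool) (x : carrier P) s : qact (cls x) s = cls (cact x s).
Proof.
apply qeq; simpl.
apply functional_extensionality => y; apply propositional_extensionality.
split.
- move=> [x' [H1 H2]]; apply: k_trans (k_act s H1) H2.
- move=> H; exists x; split => //; apply: k_refl.
Qed.

Lemma cls_surj (P : nat -> bool) (X : qcar P) : exists x, X = cls x.
Proof. destruct X as [X [x ->]]; exists x; apply qeq => //. Qed.

Lemma cact1 (P : nat -> bool) (x : carrier P) : cact x (mone S) = x.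
Proof. by case: x => [a|[o u]] /=; rewrite ?aact1 ?mmul1r. Qed.

Lemma cactM (P : nat -> bool) (x : carrier P) s t :
  cact x (@mmul S s t) = cact (cact x s) t.
Proof. by case: x => [a|[o u]] /=; rewrite ?aactM ?mmulA. Qed.

Lemma qact1 (P : nat -> bool) (X : qcar P) : qact X (mone S) = X.
Proof. by have [x ->] := cls_surj X; rewrite qact_cls cact1. Qed.

Lemma qactM (P : nat -> bool) (X : qcar P) s t :
  qact X (@mmul S s t) = qact (qact X s) t.
Proof. by have [x ->] := cls_surj X; rewrite !qact_cls cactM. Qed.

Definition A1 (P : nat -> bool) : act S := Act (@qact1 P) (@qactM P).

Definition emb (P : nat -> bool) (a : A) : A1 P := cls (inl a : carrier P).

Definition lift_Omega (P Q : nat -> bool) (H : forall m, P m -> Q m)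
  (o : Omega P) : Omega Q :=
  let (p, hp) := o in
  exist _ p (match hp with conj h1 (conj h2 h3) => conj h1 (conj (H _ h2) h3) end).

Definition lift_car (P Q : nat -> bool) (H : forall m, P m -> Q m)
  (x : carrier P) : carrier Q :=
  match x with
  | inl a => inl a
  | inr (o, u) => inr (lift_Omega H o, u)
  end.

End Acts.

Definition Pn (n m : nat) : bool := (0 < m) && (m <= n).
Definition Pinf (m : nat) : bool := 0 < m.

Lemma Pn_le (i j : nat) : i <= j -> forall m, Pn i m -> Pn j m.
Proof. by move=> hij m /andP [h1 h2]; rewrite /Pn h1 (leq_trans h2 hij). Qed.

Lemma Pn_inf (n : nat) : forall m, Pn n m -> Pinf m.
Proof. by move=> m /andP []. Qed.

Definition A1n (S : monoid) (A : act S) (n : nat) : act S := A1 A (Pn n).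
Definition A1inf (S : monoid) (A : act S) : act S := A1 A Pinf.

Arguments equation {S} A.
Arguments carrier {S} A P.
Arguments A1 {S} A P.
Arguments emb {S} A P a.
Arguments cls {S A P} x.
Arguments lift_car {S A P Q} H x.
Arguments consistent {S A} Σ.
Arguments nvars {S A} Σ.
Arguments has_solution_in {S A B} iota Σ.
Arguments n_abs_pure {S} A n.
Arguments abs_pure {S} A.
Arguments retract {S A B} iota.
Arguments is_embedding {S A B} f.

(* Main.v *)
Require Import Defs.
From Stdlib Require Import List.
From mathcomp Require Import all_boot.
From Stdlib Require Import ClassicalEpsilon ProofIrrelevance FunctionalExtensionality PropExtensionality.
Set Implicit Arguments. Unset Strict Implicit. Unset Printing Implicit Defensive.

Section Helpers.
Variable S : monoid.
Variable A : act S.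

Lemma cls_eq P (x y : carrier A P) : cls x = cls y <-> kappa x y.
Proof.
split.
- move=> E; have E' := f_equal (@sval _ _) E; simpl in E'.
  have : kappa y y by apply: k_refl.
  by rewrite -E'.
- move=> H; apply: qeq => /=; apply: functional_extensionality => z.
  apply: propositional_extensionality; split => Hz.
  + exact: k_trans (k_sym H) Hz.
  + exact: k_trans H Hz.
Qed.

Lemma kappa_resp P (T : Type) (F : carrier A P -> T) (fs : T -> S -> T) :
  (forall x s, F (cact x s) = fs (F x) s) ->
  (forall x y, gen x y -> F x = F y) ->
  forall x y, kappa x y -> F x = F y.
Proof.
move=> Hc Hg x y; elim.
- by move=> ? ? /Hg.
- by [].
- by move=> ? ? _ ->.
- by move=> ? ? ? _ -> _ ->.
- by move=> ? ? s _ E; rewrite !Hc E.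
Qed.

Definition rep P (X : qcar A P) : carrier A P :=
  proj1_sig (constructive_indefinite_description _ (cls_surj X)).

Lemma rep_spec P (X : qcar A P) : X = cls (rep X).
Proof. by rewrite /rep; case: constructive_indefinite_description. Qed.

Lemma rep_cls P (x : carrier A P) : kappa (rep (cls x)) x.
Proof. apply/cls_eq; by rewrite -rep_spec. Qed.

Lemma Omega_eq P (o1 o2 : Omega A P) : sval o1 = sval o2 -> o1 = o2.
Proof.
case: o1 o2 => [p1 h1] [p2 h2] /= E; subst p2; f_equal; apply: proof_irrelevance.
Qed.

Lemma sval_lift (P Q : nat -> bool) (H : forall m, P m -> Q m) (o : Omega A P) :
  sval (lift_Omega H o) = sval o.
Proof. by case: o => [p [h1 [h2 h3]]]. Qed.

Lemma lift_cact (P Q : nat -> bool) (H : forall m, P m -> Q m) (x : carrier A P) s :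
  lift_car H (cact x s) = cact (lift_car H x) s.
Proof. by case: x => [a|[o u]]. Qed.

Lemma kappa_lift (P Q : nat -> bool) (H : forall m, P m -> Q m) (x y : carrier A P) :
  kappa x y -> kappa (lift_car H x) (lift_car H y).
Proof.
elim.
- move=> ? ? [o1 o2 u t E Hin|o s a Hin] /=; apply: k_gen.
  + by apply: genH; rewrite !sval_lift.
  + by apply: genK; rewrite sval_lift.
- move=> ?; exact: k_refl.
- move=> ? ? _ ?; exact: k_sym.
- move=> ? ? ? _ H1 _ H2; exact: k_trans H1 H2.
- by move=> ? ? s _ ?; rewrite !lift_cact; apply: k_act.
Qed.

Lemma in_vars (Σ : seq (equation A)) e y :
  List.In e Σ -> y \in eq_vars e -> y \in vars Σ.
Proof.
elim: Σ => [|e' Σ IH] //=.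
move=> [E|He] Hy; rewrite /vars /= mem_cat.
- by subst e'; rewrite Hy.
- by rewrite (IH He Hy) orbT.
Qed.

Lemma vars_in (Σ : seq (equation A)) y :
  y \in vars Σ -> exists e, List.In e Σ /\ y \in eq_vars e.
Proof.
elim: Σ => [|e Σ IH] //; rewrite /vars /= mem_cat => /orP [Hy|Hy].
- by exists e; split; [left|].
- have [e' [H1 H2]] := IH Hy; exists e'; split; [right|] => //.
Qed.

Lemma nvars0 (Σ : seq (equation A)) : nvars Σ = 0 -> Σ = [::].
Proof.
rewrite /nvars; case: Σ => [|e Σ] //.
case E: (undup (vars (e :: Σ))) => [|z l] // _.
have : (match e with EqVar x _ _ _ => x | EqConst x _ _ => x end) \in undup (vars (e :: Σ)).
  by rewrite mem_undup /vars /= mem_cat; case: e {E} => /= *; rewrite inE eqxx.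
by rewrite E.
Qed.

End Helpers.

Section Models.
Variable S : monoid.
Variable A : act S.

Record model (Σ : seq (equation A)) := Model {
  mB : act S; mi : A -> mB; msol : nat -> option mB;
  mspec : is_embedding mi /\ (consistent Σ -> is_solution mi msol Σ) }.

Lemma model_ex Σ : exists m : model Σ, True.
Proof.
case: (classic (consistent Σ)) => [[B [iota [He [sol Hs]]]]|Hn].
- by exists (Model (conj He (fun _ => Hs))).
- have He : is_embedding (fun a : A => a) by split => // a b.
  by exists (@Model Σ A (fun a => a) (fun _ => None) (conj He (fun h => False_ind _ (Hn h)))).
Qed.

Definition theM Σ : model Σ := proj1_sig (constructive_indefinite_description _ (model_ex Σ)).
Definition BB Σ : act S := mB (theM Σ).
Definition ii Σ : A -> BB Σ := mi (theM Σ).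
Definition ss Σ : nat -> option (BB Σ) := msol (theM Σ).
Lemma ii_emb Σ : is_embedding (ii Σ). Proof. exact: (mspec (theM Σ)).1. Qed.
Lemma ss_sol Σ : consistent Σ -> is_solution (ii Σ) (ss Σ) Σ.
Proof. exact: (mspec (theM Σ)).2. Qed.

Variable C : act S.
Variable e : A -> C.
Hypothesis He : is_morphism e.

Definition Ucar := (C + {Σ : seq (equation A) & {b : BB Σ | ~ exists a, ii Σ a = b}})%type.

Definition inj Σ (b : BB Σ) : Ucar :=
  match excluded_middle_informative (exists a, ii Σ a = b) with
  | left H => inl (e (proj1_sig (constructive_indefinite_description _ H)))
  | right H => inr (existT _ Σ (exist _ b H))
  end.

Definition uact (x : Ucar) (s : S) : Ucar :=
  match x with
  | inl c => inl (aact C c s)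
  | inr (existT Σ (exist b _)) => inj (aact _ b s)
  end.

Lemma inj_ii Σ a : inj (ii Σ a) = inl (e a).
Proof.
rewrite /inj; case: excluded_middle_informative => [H|H].
- case: constructive_indefinite_description => a' /= Ha.
  by rewrite ((ii_emb Σ).2 _ _ Ha).
- by case: H; exists a.
Qed.

Lemma inj_act Σ (b : BB Σ) s : uact (inj b) s = inj (aact _ b s).
Proof.
rewrite {1}/inj; case: excluded_middle_informative => [H|H] //=.
case: constructive_indefinite_description => a /= <-.
by rewrite -(ii_emb Σ).1 inj_ii He.
Qed.

End Models.

Section Reflect.
Variable S : monoid.
Variable A : act S.
Variables P Q : nat -> bool.
Hypothesis H : forall m, P m -> Q m.

Lemma emb_morph R : is_morphism (emb A R).
Proof. by move=> a s; rewrite /emb /= qact_cls. Qed.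

Definition UU := Ucar A (A1 A P).

Definition Gm (x : carrier A Q) : option UU :=
  match x with
  | inl a => Some (inl (emb A P a))
  | inr (o, u) =>
    match excluded_middle_informative (exists o' : Omega A P, sval o' = sval o) with
    | left Hx => Some (inl (cls (inr (proj1_sig (constructive_indefinite_description _ Hx), u))))
    | right _ => option_map (fun b => inj (emb A P) (aact _ b u)) (ss (sval o).1 (sval o).2)
    end
  end.

Lemma exOmega (o : Omega A Q) :
  (exists o' : Omega A P, sval o' = sval o) <-> P (nvars (sval o).1).
Proof.
split.
- by move=> [[p [h1 [h2 h3]]] /= <-].
- case: o => [p [h1 [h2 h3]]] /= hP.
  by exists (exist _ p (conj h1 (conj hP h3))).
Qed.

Lemma Gm_cact x s : Gm (cact x s) = option_map (fun y => uact (emb A P) y s) (Gm x).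
Proof.
case: x => [a|[o u]] /=.
- by rewrite emb_morph.
- case: excluded_middle_informative => [Hx|Hx] /=.
  + by rewrite qact_cls.
  + case: (ss _ _) => [b|] //=.
    by rewrite (inj_act (emb_morph P)) aactM.
Qed.

Lemma Gm_gen x y : gen x y -> Gm x = Gm y.
Proof.
case=> [o1 o2 u t E Hin|o s a Hin] /=.
- case: excluded_middle_informative => [H1|H1];
  case: excluded_middle_informative => [H2|H2].
  + case: constructive_indefinite_description => o1' /= E1.
    case: constructive_indefinite_description => o2' /= E2.
    congr (Some (inl _)); apply/cls_eq; apply: k_gen; apply: genH; rewrite E1 E2 //.
  + by exfalso; apply: H2; apply/exOmega; rewrite -E; apply/exOmega.
  + by exfalso; apply: H1; apply/exOmega; rewrite E; apply/exOmega.
  + case: o1 o2 E Hin {H1 H2} => [[Σ x1] [hc1 _]] [[Σ2 x2] _] /= E Hin; subst Σ2.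
    have := ss_sol hc1 Hin => -[bx [by_ [-> [-> Heq]]]] /=.
    by rewrite Heq.
- case: excluded_middle_informative => [H1|H1].
  + case: constructive_indefinite_description => o' /= E1.
    congr (Some (inl _)); apply/cls_eq; apply: k_gen; apply: genK; rewrite E1 //.
  + case: o Hin {H1} => [[Σ x1] [hc1 _]] /= Hin.
    have := ss_sol hc1 Hin => -[bx [-> Heq]] /=.
    by rewrite Heq inj_ii.
Qed.

Lemma Gm_lift (x : carrier A P) : Gm (lift_car H x) = Some (inl (cls x)).
Proof.
case: x => [a|[o u]] //=.
case: excluded_middle_informative => [Hx|Hx].
- case: constructive_indefinite_description => o' /= E.
  by rewrite sval_lift in E; rewrite (Omega_eq E).
- by case: Hx; exists o; rewrite sval_lift.
Qed.

Lemma kappa_reflect (x y : carrier A P) :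
  kappa (lift_car H x) (lift_car H y) -> kappa x y.
Proof.
move=> K; have := @kappa_resp _ _ _ _ _ (fun y s => option_map (fun z => uact (emb A P) z s) y) Gm_cact Gm_gen _ _ K.
rewrite !Gm_lift => E; apply/cls_eq; congruence.
Qed.

End Reflect.

Section Main.
Variable S : monoid.
Variable A : act S.

Definition P0 : nat -> bool := fun _ => false.

Lemma kappa_P0 (x y : carrier A P0) : kappa x y -> x = y.
Proof.
elim => //.
- by move=> x1 y1 [o1 o2 u t E1 E2|o s a E3]; exfalso; [case: (proj2_sig o1) => _ [h _] | case: (proj2_sig o) => _ [h _]].
- by move=> a1 b1 c1 _ E1 _ E2; rewrite E1 E2.
- by move=> a1 b1 s1 _ E; rewrite E.
Qed.

Lemma emb_embedding (Q : nat -> bool) : is_embedding (emb A Q).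
Proof.
split; first exact: emb_morph.
move=> a b /cls_eq K.
have H0 : forall m, P0 m -> Q m by [].
have K' : kappa (lift_car H0 (inl a : carrier A P0)) (lift_car H0 (inl b)) by [].
have := kappa_P0 (kappa_reflect K'); by case.
Qed.

Definition liftq (P Q : nat -> bool) (H : forall m, P m -> Q m) (X : qcar A P) : qcar A Q :=
  cls (lift_car H (rep X)).

Lemma liftq_cls (P Q : nat -> bool) (H : forall m, P m -> Q m) x :
  liftq H (cls x) = cls (lift_car H x).
Proof. apply/cls_eq; apply: kappa_lift; exact: rep_cls. Qed.

Lemma liftq_emb (P Q : nat -> bool) (H : forall m, P m -> Q m) :
  @is_embedding S (A1 A P) (A1 A Q) (liftq H).
Proof.
split.
- move=> X s; have [x ->] := cls_surj X.
  by rewrite /= qact_cls !liftq_cls qact_cls lift_cact.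
- move=> X Y; have [x ->] := cls_surj X; have [y ->] := cls_surj Y.
  rewrite !liftq_cls => /cls_eq K; apply/cls_eq; exact: kappa_reflect K.
Qed.

Lemma sol_lemma (P : nat -> bool) (Σ : seq (equation A)) :
  consistent Σ -> (0 < nvars Σ -> P (nvars Σ)) -> has_solution_in (emb A P) Σ.
Proof.
move=> hc hP0.
case: (posnP (nvars Σ)) => [/nvars0 ->|hpos].
  by exists (fun _ => None) => e.
have hP := hP0 hpos.
exists (fun x => match excluded_middle_informative (x \in vars Σ) with
  | left Hx => Some (cls (inr (exist _ (Σ, x) (conj hc (conj hP Hx)) : Omega A P, mone S)))
  | right _ => None end).
move=> e He; case: e He => [x s y t|x s a] He.
- have hx : x \in vars Σ by apply: (in_vars He); rewrite inE eqxx.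
  have hy : y \in vars Σ by apply: (in_vars He); rewrite !inE eqxx orbT.
  case: excluded_middle_informative => [Hx|//]; case: excluded_middle_informative => [Hy|//].
  do 2 eexists; split; [reflexivity|split; [reflexivity|]].
  rewrite /= !qact_cls /= !mmul1l; apply/cls_eq; apply: k_gen; exact: genH.
- have hx : x \in vars Σ by apply: (in_vars He); rewrite inE eqxx.
  case: excluded_middle_informative => [Hx|//].
  eexists; split; [reflexivity|].
  rewrite /= !qact_cls /= !mmul1l; apply/cls_eq; apply: k_gen; exact: genK.
Qed.

Lemma pure_of (P : nat -> bool) (Σ : seq (equation A)) :
  retract (emb A P) -> consistent Σ -> (0 < nvars Σ -> P (nvars Σ)) ->
  has_solution_in (B := A) id Σ.
Proof.
move=> [r [Hr Hre]] hc hP; have [sol Hs] := sol_lemma hc hP.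
exists (fun x => option_map r (sol x)) => e He; have := Hs e He.
case: e {He} => [x s y t|x s a].
- move=> [bx [by_ [-> [-> E]]]]; exists (r bx), (r by_); do 2 split => //.
  by rewrite -!Hr E.
- move=> [bx [-> E]]; exists (r bx); split => //.
  by rewrite -Hr E Hre.
Qed.

Section Retr.
Variable P : nat -> bool.
Hypothesis HP : forall Σ : seq (equation A), consistent Σ -> P (nvars Σ) ->
  has_solution_in (B := A) id Σ.

Lemma solA_ex Σ : exists sol, consistent Σ -> P (nvars Σ) -> is_solution (B := A) id sol Σ.
Proof.
case: (classic (consistent Σ /\ P (nvars Σ))) => [[h1 h2]|hn].
- have [sol Hs] := HP h1 h2; by exists sol.
- by exists (fun _ => None) => h1 h2; case: hn.
Qed.

Definition solA Σ := proj1_sig (constructive_indefinite_description _ (solA_ex Σ)).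
Lemma solA_spec Σ : consistent Σ -> P (nvars Σ) -> is_solution (B := A) id (solA Σ) Σ.
Proof. exact: (proj2_sig (constructive_indefinite_description _ (solA_ex Σ))). Qed.

Definition RR (x : carrier A P) : option A :=
  match x with
  | inl a => Some a
  | inr (o, u) => option_map (fun b => aact A b u) (solA (sval o).1 (sval o).2)
  end.

Lemma RR_cact x s : RR (cact x s) = option_map (fun b => aact A b s) (RR x).
Proof.
case: x => [a|[o u]] //=; case: (solA _ _) => //= b; by rewrite aactM.
Qed.

Lemma RR_gen x y : gen x y -> RR x = RR y.
Proof.
case=> [o1 o2 u t E Hin|o s a Hin] /=.
- case: o1 o2 E Hin => [[Σ x1] [hc1 [hp1 _]]] [[Σ2 x2] _] /= E Hin; subst Σ2.
  have := solA_spec hc1 hp1 Hin => -[bx [by_ [-> [-> Heq]]]] /=.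
  by rewrite Heq.
- case: o Hin => [[Σ x1] [hc1 [hp1 _]]] /= Hin.
  have := solA_spec hc1 hp1 Hin => -[bx [-> Heq]] /=.
  by rewrite Heq.
Qed.

Lemma RR_some x : exists a, RR x = Some a.
Proof.
case: x => [a|[[[Σ x] [hc [hp hx]]] u]] /=; first by exists a.
simpl in hc, hp, hx.
have [e [He Hxe]] := vars_in hx.
have := solA_spec hc hp He.
case: e He Hxe => [x1 s y t|x1 s a] He Hxe.
- move=> [bx [by_ [E1 [E2 _]]]].
  move: Hxe; rewrite !inE => /orP [/eqP ->|/eqP ->].
  + by rewrite E1; eexists.
  + by rewrite E2; eexists.
- move=> [bx [E1 _]]; move: Hxe; rewrite inE => /eqP ->.
  by rewrite E1; eexists.
Qed.

Definition rr (X : qcar A P) : A :=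
  proj1_sig (constructive_indefinite_description _ (RR_some (rep X))).

Lemma rr_cls x : RR x = Some (rr (cls x)).
Proof.
rewrite /rr; case: constructive_indefinite_description => a /= <-.
apply: (@kappa_resp _ _ _ _ _ (fun y s => option_map (fun b => aact A b s) y) RR_cact RR_gen).
apply: k_sym; exact: rep_cls.
Qed.

Lemma retract_of : retract (emb A P).
Proof.
exists rr; split.
- move=> X s; have [x ->] := cls_surj X.
  rewrite /= qact_cls.
  have := rr_cls (cact x s); rewrite RR_cact rr_cls /= => -[E]; exact: esym E.
- move=> a; have := rr_cls (inl a) => -[E]; by rewrite /emb -E.
Qed.

End Retr.

End Main.

Theorem mainTheorem15 (S : monoid) (A : act S) :
  (* (a) a ↦ [a] embeds A into A^n_1 and into A^{aleph_0}_1 ... *)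
  ((forall n : nat, is_embedding (emb A (Pn n))) /\ is_embedding (emb A Pinf) /\
   (* ... the natural maps identify A^i_1 ⊆ A^j_1 for i <= j ... *)
   (forall (i j : nat) (Hij : i <= j),
      exists f : A1n A i -> A1n A j,
        is_embedding f /\
        forall x : carrier A (Pn i), f (cls x) = cls (lift_car (Pn_le Hij) x)) /\
   (* ... and A^{aleph_0}_1 = \bigcup_n A^n_1 *)
   (exists f : forall n : nat, A1n A n -> A1inf A,
      (forall n : nat, is_embedding (f n) /\
         forall x : carrier A (Pn n), f n (cls x) = cls (lift_car (Pn_inf (n:=n)) x)) /\
      (forall y : A1inf A, exists (n : nat) (x : A1n A n), y = f n x))) /\
  (* (b) *)
  (forall (m : nat) (Σ : seq (equation A)), consistent Σ -> nvars Σ = m ->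
     has_solution_in (emb A (Pn m)) Σ /\
     (forall n : nat, m <= n -> has_solution_in (emb A (Pn n)) Σ) /\
     has_solution_in (emb A Pinf) Σ) /\
  (* (c) *)
  ((forall n : nat, n_abs_pure A n <-> retract (emb A (Pn n))) /\
   (abs_pure A <-> retract (emb A Pinf))).
Proof.
split; [|split].
- split; [by move=> n; apply: emb_embedding|].
  split; [exact: emb_embedding|].
  split.
  + move=> i j Hij; exists (liftq (Pn_le Hij)); split; [exact: liftq_emb|].
    by move=> x; rewrite liftq_cls.
  + exists (fun n => liftq (Pn_inf (n:=n))); split.
    * move=> n; split; [exact: liftq_emb|]; by move=> x; rewrite liftq_cls.
    * move=> y; have [x ->] := cls_surj y.
      case: x => [a|[o u]].
      -- exists 0, (cls (inl a)); by rewrite liftq_cls.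
      -- case: o => [p [hc [hp hx]]].
         pose n := nvars p.1.
         have hpn : Pn n n by rewrite /Pn leqnn andbT; exact: hp.
         exists n, (cls (inr (exist _ p (conj hc (conj hpn hx)) : Omega A (Pn n), u))).
         rewrite liftq_cls /=; congr (cls (inr (_, u))); exact: Omega_eq.
- move=> m Σ hc hm; split; [|split].
  + apply: sol_lemma => // h; by rewrite /Pn h hm leqnn.
  + move=> n hn; apply: sol_lemma => // h; by rewrite /Pn h hm.
  + by apply: sol_lemma.
- split.
  + move=> n; split.
    * move=> hpure; apply: retract_of => Σ hc /andP [_ h]; exact: hpure.
    * move=> hr Σ hc hn; apply: (pure_of hr hc) => h; by rewrite /Pn h.
  + split.
    * move=> hpure; apply: retract_of => Σ hc _; exact: (hpure (nvars Σ)).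
    * move=> hr n Σ hc _; exact: (pure_of hr hc).
Qed.
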